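(* Let $\mathrm{Tr}:\mathsf{SU}(3)\to\mathbb{C}$ be the trace map and $\Delta=\mathrm{Tr}(\mathsf{SU}(3))\subseteq\mathbb{C}$. Then $\mathrm{Tr}$ is a local submersion at almost all points of $\Delta$: for Lebesgue-almost every $z\in\Delta$, the differential of $\mathrm{Tr}$ (viewed as a map to $\mathbb{C}\cong\mathbb{R}^2$) is surjective at every point of $\mathrm{Tr}^{-1}(z)$. *)

(* Defs.v *)
From HB Require Import structures.
From mathcomp Require Import all_boot all_order all_algebra.
From mathcomp Require Import complex.
From mathcomp Require Import all_classical all_reals all_analysis.
Unset Printing Implicit Defensive.
Import Order.TTheory GRing.Theory Num.Theory.
Local Open Scope ring_scope.
Local Open Scope classical_set_scope.

Definition adj3 (R : rcfType) (M : 'M[R[i]]_3) : 'M[R[i]]_3 :=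
  (map_mx (fun z : R[i] => z^*) M)^T.

Definition SU3 (R : rcfType) : set 'M[R[i]]_3 :=
  [set U | U *m adj3 R U = 1%:M /\ \det U = 1].

Definition su3 (R : rcfType) : set 'M[R[i]]_3 :=
  [set X | adj3 R X = - X /\ \tr X = 0].

Definition tangentSU3 (R : rcfType) (U : 'M[R[i]]_3) : set 'M[R[i]]_3 :=
  [set U *m X | X in su3 R].

(* Since Tr is the restriction of a (real-)linear map on M_3(C), its
   differential at U is V |-> \tr V on T_U SU(3). It is surjective onto
   C = R^2 iff its image is all of C. *)
Definition dTr_surjective (R : rcfType) (U : 'M[R[i]]_3) : Prop :=
  forall w : R[i], exists2 V, tangentSU3 R U V & \tr V = w.

Definition Delta (R : rcfType) : set R[i] := [set \tr U | U in SU3 R].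

Definition c_of_pair (R : rcfType) (p : R * R) : R[i] := (p.1 +i* p.2)%C.

(* Main.v *)
Require Import Defs.
From HB Require Import structures.
From mathcomp Require Import all_boot all_order all_algebra.
From mathcomp Require Import complex.
From mathcomp Require Import all_classical all_reals all_analysis.
From mathcomp Require Import polyrcf measurable_realfun ring lra.
Import Order.TTheory GRing.Theory Num.Theory.
Local Open Scope ring_scope.
Local Open Scope classical_set_scope.

Definition Pd {R : realType} (x y : R) : R :=
  (x^+2+y^+2)^+2 + 18*(x^+2+y^+2) - 27 - 8*x^+3 + 24*x*y^+2.

Lemma section_null (R : realType) (x : R) :
  lebesgue_measure [set y : R | Pd x y = 0] = 0%E.
Proof.
pose p : {poly R} := 'X^4 + (2*x^+2+24*x+18)%:P * 'X^2 + (x^+4 + 18*x^+2 - 27 - 8*x^+3)%:P.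
have pE y : p.[y] = Pd x y.
  by rewrite /p /Pd !(hornerD, hornerM, hornerC, hornerXn, hornerX); ring.
have p0 : p != 0.
  apply/eqP => /(congr1 (fun q : {poly R} => q`_4)).
  by rewrite /p !coefE /= mulr0 !addr0; apply/eqP; rewrite oner_eq0.
apply: countable_lebesgue_measure0; apply: finite_set_countable.
apply: (sub_finite_set _ (finite_seq (rootsR p))).
move=> y /= Py.
rewrite /= -(roots_on_rootsR p0 y) in_itv /=; apply/rootP; by rewrite pE.
Qed.

Lemma Pd_measurable (R : realType) :
  measurable_fun [set: R * R] (fun p : R * R => Pd p.1 p.2).
Proof.
have m1 : measurable_fun [set: R * R] (fun p : R * R => p.1) by exact: measurable_fst.
have m2 : measurable_fun [set: R * R] (fun p : R * R => p.2) by exact: measurable_snd.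
rewrite /Pd.
repeat (apply: measurable_funD || apply: measurable_funB || apply: measurable_funN || apply: measurable_funM
  || apply: measurable_funX || exact: measurable_cst || exact: m1 || exact: m2).
Qed.

Lemma Z_negl (R : realType) :
  ((@lebesgue_measure R) \x (@lebesgue_measure R))%E.-negligible
    [set p : R * R | Pd p.1 p.2 = 0].
Proof.
exists [set p : R * R | Pd p.1 p.2 = 0]; split => //.
  have := @Pd_measurable R measurableT [set 0] (measurable_set1 (0:R)).
  by rewrite setTI.
rewrite /product_measure1; apply: integral0_eq => x _ /=.
rewrite -(@section_null R x); congr (lebesgue_measure _).
by apply/seteqP; split => y /=; rewrite /xsection /= inE.
Qed.

Lemma mx3E {R : Type} (A : 'M[R]_3) :
  A = \matrix_(i, j) (A (inord (val i)) (inord (val j))).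
Proof. by apply/matrixP => i j; rewrite mxE !inord_val. Qed.

Lemma det3 (R : comNzRingType) (A : 'M[R]_3) :
  \det A = A 0 0 * (A 1 1 * A 2 2 - A 1 2 * A 2 1)
         - A 0 1 * (A 1 0 * A 2 2 - A 1 2 * A 2 0)
         + A 0 2 * (A 1 0 * A 2 1 - A 1 1 * A 2 0).
Proof.
rewrite [in LHS](mx3E A).
rewrite (expand_det_row _ 0) !big_ord_recr big_ord0 /= /cofactor.
rewrite !(expand_det_row _ 0) !big_ord_recr !big_ord0 /= /cofactor.
rewrite !det_mx11 !mxE /=.
have e : forall i j : 'I_3, A i j = A (inord i) (inord j) by move=> i j; rewrite !inord_val.
rewrite [A 0 0]e [A 0 1]e [A 0 2]e [A 1 0]e [A 1 1]e [A 1 2]e [A 2 0]e [A 2 1]e [A 2 2]e /=.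
rewrite !expr0 !expr1 /=. ring.
Qed.

Lemma tr3 (R : comNzRingType) (A : 'M[R]_3) : \tr A = A 0 0 + A 1 1 + A 2 2.
Proof.
rewrite [in LHS](mx3E A) /mxtrace !big_ord_recr big_ord0 /= add0r !mxE /=.
have e : forall i j : 'I_3, A i j = A (inord i) (inord j) by move=> i j; rewrite !inord_val.
by rewrite [A 0 0]e [A 1 1]e [A 2 2]e.
Qed.

Definition e2 {R : comNzRingType} (A : 'M[R]_3) :=
  A 0 0 * A 1 1 - A 0 1 * A 1 0 + A 0 0 * A 2 2 - A 0 2 * A 2 0
  + A 1 1 * A 2 2 - A 1 2 * A 2 1.

Lemma CH3 (R : comNzRingType) (A : 'M[R]_3) :
  A *m A *m A - \tr A *: (A *m A) + e2 A *: A - \det A *: 1%:M = 0.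
Proof.
rewrite det3 tr3 /e2.
set a := fun i j : nat => A (inord i) (inord j).
have -> : A = \matrix_(i, j) a i j by rewrite /a; exact: mx3E.
apply/matrixP => i j; rewrite !mxE.
rewrite !big_ord_recr !big_ord0 /= !mxE.
rewrite !big_ord_recr !big_ord0 /= !mxE /=.
case: i => [[|[|[|//]]] Hi]; case: j => [[|[|[|//]]] Hj] /=; ring.
Qed.

Lemma e2_tr (R : comNzRingType) (A : 'M[R]_3) :
  2 * e2 A = \tr A ^+ 2 - \tr (A *m A).
Proof.
rewrite !tr3 /e2.
set a := fun i j : nat => A (inord i) (inord j).
have -> : A = \matrix_(i, j) a i j by rewrite /a; exact: mx3E.
rewrite !mxE !big_ord_recr !big_ord0 /= !mxE /=.
ring.
Qed.

Lemma tr_mul_delta (R : comNzRingType) n (A : 'M[R]_n) j k :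
  \tr (A *m delta_mx k j) = A j k.
Proof.
rewrite /mxtrace (bigD1 j) //= big1 => [|i Hij]; rewrite mxE.
- rewrite (bigD1 k) //= big1 => [|l Hl]; rewrite mxE.
  + by rewrite !eqxx mulr1 !addr0.
  + by rewrite (negbTE Hl) mulr0.
- by rewrite big1 // => l _; rewrite mxE (negbTE Hij) andbF mulr0.
Qed.

Lemma tr_delta (R : comNzRingType) n (j k : 'I_n) :
  \tr (delta_mx k j : 'M[R]_n) = (k == j)%:R.
Proof.
by rewrite -[delta_mx k j]mul1mx tr_mul_delta mxE eq_sym.
Qed.

Section A.
Variable R : rcfType.
Local Notation C := (R[i]).

Lemma conjE (x : C) : x^* = (x^*)%C.
Proof. by case: x. Qed.

Lemma conjR (a : R) : ((a%:C)%C)^* = (a%:C)%C :> C.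
Proof. by rewrite conjE; apply/eqP; rewrite eq_complex /= oppr0 !eqxx. Qed.

Lemma conj_i : ('i%C : C)^* = - 'i%C.
Proof. by rewrite conjE; apply/eqP; rewrite eq_complex /= oppr0 !eqxx. Qed.

Lemma adj3E (M : 'M[C]_3) i j : adj3 R M i j = (M j i)^*.
Proof. by rewrite !mxE. Qed.

Lemma adj3D (A B : 'M[C]_3) : adj3 R (A + B) = adj3 R A + adj3 R B.
Proof. by apply/matrixP => i j; rewrite !mxE rmorphD. Qed.

Lemma adj3N (A : 'M[C]_3) : adj3 R (- A) = - adj3 R A.
Proof. by apply/matrixP => i j; rewrite !mxE rmorphN. Qed.

Lemma adj3Z c (A : 'M[C]_3) : adj3 R (c *: A) = c^* *: adj3 R A.
Proof. by apply/matrixP => i j; rewrite !mxE rmorphM. Qed.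

Lemma adj3_delta (j k : 'I_3) : adj3 R (delta_mx j k) = delta_mx k j.
Proof. by apply/matrixP => a b; rewrite !mxE rmorph_nat andbC. Qed.

Lemma su3_lin (a b : R) X Y : su3 R X -> su3 R Y -> su3 R ((a%:C)%C *: X + (b%:C)%C *: Y).
Proof.
move=> [hX tX] [hY tY]; split.
  by rewrite adj3D !adj3Z hX hY !conjR !scalerN opprD.
by rewrite mxtraceD !mxtraceZ tX tY !mulr0 addr0.
Qed.


Definition phi (w z : C) := w^* * z + w * z^*.

Lemma dual (U : 'M[C]_3) : ~ dTr_surjective R U ->
  exists2 w : C, w != 0 & forall X, su3 R X -> phi w (\tr (U *m X)) = 0.
Proof.
move=> nS; apply: contrapT => H; apply: nS.
have H' : forall w : C, w != 0 -> exists X, su3 R X /\ phi w (\tr (U *m X)) != 0.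
  move=> w w0; apply: contrapT => nE; apply: H; exists w => // X sX.
  by apply: contrapT => ne; apply: nE; exists X; split => //; apply/eqP.
have [X0 [s0X e0]] := H' 1 (oner_neq0 _).
have s00 : \tr (U *m X0) != 0.
  by apply: contra e0 => /eqP ->; rewrite /phi mulr0 rmorph0 mulr0 addr0.
have i0 : ('i%C : C) != 0 by rewrite eq_complex /= oner_eq0 andbF.
have [X1 [s1X e1]] := H' ('i%C * \tr (U *m X0)) (mulf_neq0 i0 s00).
move=> z.
move: e1; rewrite /phi.
case E0: (\tr (U *m X0)) => [a0 b0]; case E1: (\tr (U *m X1)) => [a1 b1].
rewrite !conjE; simpc; rewrite eq_complex /= => hd.
have d0 : a0 * b1 - a1 * b0 != 0.
  apply: contra hd => /eqP hd0; apply/andP; split; apply/eqP.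
    have -> : - (b0 * a1) + a0 * b1 = a0 * b1 - a1 * b0 by ring.
    by rewrite hd0 addr0.
  by ring.
case: z => x y.
pose al := (x * b1 - y * a1) / (a0 * b1 - a1 * b0).
pose be := (a0 * y - b0 * x) / (a0 * b1 - a1 * b0).
exists (U *m ((al%:C)%C *: X0 + (be%:C)%C *: X1)).
  by exists ((al%:C)%C *: X0 + (be%:C)%C *: X1) => //; exact: su3_lin.
rewrite mulmxDr -!scalemxAr mxtraceD !mxtraceZ E0 E1.
rewrite -[(al%:C)%C]/(al +i* 0)%C -[(be%:C)%C]/(be +i* 0)%C.
simpc; apply/eqP; rewrite eq_complex /=; apply/andP; split; apply/eqP;
  rewrite /al /be; field; exact: d0.
Qed.


Lemma comb1 (F : comNzRingType) (I w w' u v u' v' : F) : I * I = -1 ->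
  w' * (u - v) + w * (u' - v') = 0 ->
  w' * (I * (u + v)) + w * (- I * (u' + v')) = 0 ->
  2 * (w' * u - w * v') = 0.
Proof.
move=> hI e1 e2.
have -> : 2 * (w' * u - w * v') = (w' * (u - v) + w * (u' - v'))
   - I * (w' * (I * (u + v)) + w * (- I * (u' + v')))
   + (1 + I * I) * (w' * (u + v) - w * (u' + v')) by ring.
by rewrite e1 e2 hI subrr mulr0 mul0r subr0 add0r.
Qed.

Lemma comb2 (F : comNzRingType) (I w w' u v u' v' : F) : I * I = -1 ->
  w' * (I * (u - v)) + w * (- I * (u' - v')) = 0 ->
  (w' * u - w * u') - (w' * v - w * v') = 0.
Proof.
move=> hI e3.
have -> : (w' * u - w * u') - (w' * v - w * v') =
  - I * (w' * (I * (u - v)) + w * (- I * (u' - v')))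
  + (1 + I * I) * ((w' * u - w * u') - (w' * v - w * v')) by ring.
by rewrite e3 hI subrr mul0r mulr0 addr0.
Qed.

Arguments comb1 {F I w w' u v u' v'}.
Arguments comb2 {F I w w' u v u' v'}.

Lemma ii : ('i%C : C) * 'i%C = -1.
Proof. by rewrite -expr2 sqr_i. Qed.

Lemma scalar_cond (U : 'M[C]_3) (w : C) :
  (forall X, su3 R X -> phi w (\tr (U *m X)) = 0) ->
  exists m, w^* *: U - w *: adj3 R U = m%:M.
Proof.
move=> H.
have offd : forall j k : 'I_3, j != k -> w^* * U j k - w * (U k j)^* = 0.
  move=> j k jk.
  have kj : (k == j) = false by rewrite eq_sym; exact: negbTE.
  have s1 : su3 R (delta_mx k j - delta_mx j k).
    split; first by rewrite adj3D adj3N !adj3_delta opprD opprK addrC.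
    by rewrite mxtraceD raddfN /= !tr_delta kj (negbTE jk) subrr.
  have s2 : su3 R ('i%C *: (delta_mx k j + delta_mx j k)).
    split; first by rewrite adj3Z adj3D !adj3_delta conj_i scaleNr addrC.
    by rewrite mxtraceZ mxtraceD !tr_delta kj (negbTE jk) addr0 mulr0.
  have e1 := H _ s1; have e2 := H _ s2.
  move: e1 e2; rewrite /phi mulmxDr mulmxN mxtraceD raddfN /= !tr_mul_delta.
  rewrite -scalemxAr mxtraceZ mulmxDr mxtraceD !tr_mul_delta.
  rewrite !rmorphB !rmorphM !rmorphD /= conj_i => e1 e2.
  have := comb1 ii e1 e2.
  by move/eqP; rewrite mulf_eq0 pnatr_eq0 /= => /eqP.
have diag : forall j k : 'I_3, j != k ->
    (w^* * U j j - w * (U j j)^*) - (w^* * U k k - w * (U k k)^*) = 0.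
  move=> j k jk.
  have s3 : su3 R ('i%C *: (delta_mx j j - delta_mx k k)).
    split; first by rewrite adj3Z adj3D adj3N !adj3_delta conj_i scaleNr.
    by rewrite mxtraceZ mxtraceD raddfN /= !tr_delta !eqxx subrr mulr0.
  have := H _ s3.
  rewrite /phi -scalemxAr mxtraceZ mulmxDr mulmxN mxtraceD raddfN /= !tr_mul_delta.
  rewrite ?rmorphB !rmorphM ?rmorphB /= conj_i => e3.
  exact: comb2 ii e3.
exists (w^* * U 0 0 - w * (U 0 0)^*).
apply/matrixP => i j; rewrite !mxE.
case: (eqVneq i j) => [<-|ij].
  rewrite ?eqxx mulr1n.
  case: (eqVneq i 0) => [->//|i0].
  by apply/eqP; rewrite -subr_eq0; apply/eqP; exact: diag.
by rewrite ?(negbTE ij) mulr0n offd.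
Qed.


Definition Pc (t tc : C) := (t * tc) ^+ 2 + 18 * (t * tc) - 27 - 4 * (t ^+ 3 + tc ^+ 3).

Lemma elim_gen (t tc al be : C) :
  t ^+ 2 - 2 * tc = al * t + 3 * be ->
  al ^+ 2 + be - t * al + tc = 0 ->
  al * be - t * be - 1 = 0 -> Pc t tc = 0.
Proof.
move=> h1 h2 h3.
have b0 : be != 0.
  apply/eqP => b00; move: h3; rewrite b00 !mulr0 subrr sub0r => /eqP.
  by rewrite oppr_eq0 oner_eq0.
have ha : al = t + be^-1.
  apply: (mulfI b0); rewrite mulrDr mulfV // mulrC; apply/eqP.
  by rewrite -subr_eq0 -h3; apply/eqP; ring.
rewrite ha in h1 h2.
have ht : t = be ^+ 2 - 2 / be.
  apply/eqP; rewrite -subr_eq0; apply/eqP.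
  have -> : t - (be ^+ 2 - 2 / be) =
     be * (2 * ((t + be^-1) ^+ 2 + be - t * (t + be^-1) + tc)
           + (t ^+ 2 - 2 * tc - ((t + be^-1) * t + 3 * be))) by field.
  by rewrite h2 h1 subrr mulr0 add0r mulr0.
have htc : tc = be^-2 - 2 * be.
  apply/eqP; rewrite -subr_eq0; apply/eqP.
  have -> : tc - (be^-2 - 2 * be) = ((t + be^-1) ^+ 2 + be - t * (t + be^-1) + tc)
     - (t / be + be^-2 + be) - (be^-2 - 2 * be) by field.
  by rewrite h2 sub0r ht; field; exact: b0.
by rewrite /Pc ht htc; field; exact: b0.
Qed.

Lemma scalar_case (mu : C) : mu ^+ 3 = 1 -> Pc (mu *+ 3) (3 * mu ^+ 2) = 0.
Proof.
move=> h.
have -> : Pc (mu *+ 3) (3 * mu ^+ 2) = 81 * (mu ^+ 3) ^+ 2 + 162 * mu ^+ 3 - 27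
   - 108 * mu ^+ 3 - 108 * (mu ^+ 3) ^+ 2 by rewrite /Pc; ring.
by rewrite h; ring.
Qed.

Lemma tr_adj (U : 'M[C]_3) : \tr (adj3 R U) = (\tr U)^*.
Proof. by rewrite !tr3 !adj3E !rmorphD. Qed.

Lemma alg_main (U : 'M[C]_3) : SU3 R U -> ~ dTr_surjective R U ->
  Pc (\tr U) (\tr U)^* = 0.
Proof.
move=> [hU hdet] nS.
have hU' : adj3 R U *m U = 1%:M := mulmx1C hU.
have [w w0 hw] := @dual U nS.
have [m hm] := @scalar_cond U w hw.
have wc0 : w^* != 0 by rewrite conjC_eq0.
pose al := m / w^*; pose be := w / w^*.
have hQ : U *m U = al *: U + be *: 1%:M.
  have := congr1 (fun A => A *m U) hm.
  rewrite /= mulmxBl -!scalemxAl hU' mul_scalar_mx => /eqP; rewrite subr_eq => /eqP h.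
  rewrite -[U *m U]scale1r -(mulVf wc0) -scalerA h scalerDr !scalerA.
  by rewrite /al /be mulVf // ![_^-1 * _]mulrC.
have hCH := @CH3 _ U; rewrite hdet in hCH.
set t := \tr U in hCH *.
have he2 := @e2_tr _ U; rewrite -/t in he2.
have e2c : e2 U = t^*.
  have := congr1 (fun A => \tr (A *m adj3 R U)) hCH.
  rewrite /= mul0mx !mulmxDl !mulNmx -!scalemxAl -!mulmxA hU !mulmx1 mul1mx.
  rewrite !mxtraceD !raddfN /= !mxtraceZ tr_adj mxtrace1 mxtrace0 -/t.
  move=> h; apply/eqP; rewrite -subr_eq0; apply/eqP.
  have -> : e2 U - t^* = (\tr (U *m U) - t * t + e2 U * 3%:R - 1 * t^*)
      - (2 * e2 U - (t ^+ 2 - \tr (U *m U))) by ring.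
  by rewrite h he2 subrr subr0.
have hU3 : U *m U *m U = al *: (al *: U + be *: 1%:M) + be *: U.
  by rewrite hQ mulmxDl -!scalemxAl mul1mx hQ.
rewrite hU3 hQ in hCH.
pose K := al ^+ 2 + be - t * al + e2 U; pose L := al * be - t * be - 1.
have hKL : forall i j, K * U i j + L * (1%:M : 'M[C]_3) i j = 0.
  move=> i j; have := congr1 (fun A : 'M[C]_3 => A i j) hCH; rewrite /= !mxE => h.
  by rewrite ?mxE -h /K /L; ring.
have htr2 : \tr (U *m U) = al * t + be * 3%:R.
  by rewrite hQ mxtraceD !mxtraceZ mxtrace1.
case: (eqVneq K 0) => [K0|K0].
  have L0 : L = 0.
    by have := hKL 0 0; rewrite K0 mul0r add0r mxE eqxx mulr1n mulr1.
  apply: (@elim_gen t t^* al be).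
  - by rewrite -e2c he2 htr2; ring.
  - by rewrite -e2c; exact: K0.
  - exact: L0.
pose mu := - L / K.
have hUs : U = mu%:M.
  apply/matrixP => i j; rewrite -scalemx1 [RHS]mxE; apply: (mulfI K0).
  rewrite mulrA [K * mu]mulrC /mu divfK //.
  by apply/eqP; rewrite mulNr -addr_eq0 hKL.
have ht : t = mu *+ 3 by rewrite /t hUs mxtrace_scalar.
have hmu : mu ^+ 3 = 1 by rewrite -hdet hUs det_scalar.
have he : e2 U = 3 * mu ^+ 2.
  by rewrite hUs /e2 !mxE /= !mulr1n !mulr0n; ring.
by rewrite -e2c he ht; exact: scalar_case.
Qed.

End A.

Lemma Pc_Pd (R : realType) (x y : R) :
  Pc R ((x +i* y)%C) ((x +i* y)%C)^* = ((Pd x y)%:C)%C.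
Proof.
have hI : ('i%C : R[i]) * 'i%C = -1 := @ii R.
have -> : (((x +i* y)%C : R[i])^*) = (x%:C)%C + - 'i%C * (y%:C)%C.
  rewrite conjE /=.
  by apply/eqP; rewrite eq_complex /=; apply/andP; split; apply/eqP; ring.
have -> : ((x +i* y)%C : R[i]) = (x%:C)%C + 'i%C * (y%:C)%C.
  by apply/eqP; rewrite eq_complex /= !mul0r !mulr0 !mul1r !subr0 !add0r !addr0 !eqxx.
set X := (x%:C)%C; set Y := (y%:C)%C; set I := 'i%C.
rewrite /Pc.
have e1 : (X + I * Y) * (X + - I * Y) = X ^+ 2 + Y ^+ 2.
  have -> : (X + I * Y) * (X + - I * Y) = X ^+ 2 - (I * I) * Y ^+ 2 by ring.
  by rewrite hI; ring.
have e2 : (X + I * Y) ^+ 3 + (X + - I * Y) ^+ 3 = 2 * X ^+ 3 + 6 * (I * I) * X * Y ^+ 2.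
  by ring.
rewrite e1 e2 hI /Pd /X /Y ?rmorphD ?rmorphB ?rmorphN ?rmorphM ?rmorphXn ?rmorph_nat.
ring.
Qed.

Theorem proposition6p1 (R : realType) :
  ((@lebesgue_measure R) \x (@lebesgue_measure R))%E.-negligible
    [set p : R * R | Delta R (c_of_pair R p) /\
       exists2 U, SU3 R U /\ \tr U = c_of_pair R p & ~ dTr_surjective R U].
Proof.
have [A [mA A0 sub]] := Z_negl R.
exists A; split => // -[x y] [_ [U [hSU htr] nS]]; apply: sub => /=.
have := @alg_main R U hSU nS; rewrite htr /c_of_pair /= Pc_Pd.
by move/(congr1 (@complex.Re R)) => /=.
Qed.
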